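(* (1) For all $1\le i,j\le d$, $v^{ij}(-1,-1)\mathbf 1=2L_r^{ij}(-2)\mathbf 1$ in $M_r$. (2) For $1\le i,j\le d$ with $i\ne j$ and $m,n\in\mathbb Z_{<0}$, $v^{ij}(m-1,n)\mathbf 1=-\frac1m L_r^{ii}(-1)v^{ij}(m,n)\mathbf 1$. (3) For $1\le i,j\le d$ with $i\ne j$ and $m,n\in\mathbb Z_{<0}$, $v^{ii}(m-1,n)\mathbf 1=\frac{2}{m(m+n-1)}L_r^{ii}(0)L_r^{ij}(-1)v^{ij}(n,m)\mathbf 1$.
   Context: Fix an integer $d\ge 2$ and $r\in\mathbb{C}$. Let $\hat{\mathfrak h}$ be the complex Lie algebra with basis $\{v^i(m)\mid 1\le i\le d,\ m\in\mathbb{Z}\}\cup\{\mathbf c\}$ and bracket $[v^i(m),v^j(n)]=\delta_{m+n,0}\delta_{i,j}\,m\,\mathbf c$, $[\mathbf c,\hat{\mathfrak h}]=0$. In $A=U(\hat{\mathfrak h})/\langle \mathbf c-1\rangle$ let $v^{ij}(m,n)$ be the image of $v^i(m)v^j(n)$; then $v^{ij}(m,n)=v^{ji}(n,m)$ unless $i=j$ and $m=-n$, and $v^{ii}(m,-m)=v^{ii}(-m,m)+m$. Let $\mathcal B=\{v^{ii}(m,n)\mid 1\le i\le d,\ m\le n\}\cup\{v^{ij}(m,n)\mid 1\le i<j\le d,\ m,n\in\mathbb Z\}$; then $\mathcal B\cup\{1\}$ is linearly independent, $\mathcal L:=\mathrm{span}_{\mathbb C}\mathcal B\oplus\mathbb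 C\subset A$ contains every $v^{ij}(m,n)$ and is closed under $[x,y]=xy-yx$. With $\pi_1,\pi_2$ the projections of $\mathcal L$ onto $\mathrm{span}\,\mathcal B$ and onto $\mathbb C$, $[x,y]_r=\pi_1([x,y])+r\pi_2([x,y])$ is a Lie bracket on $\mathcal L$; call this Lie algebra $\mathcal L_r$. Let $\mathcal B_+=\{v^{ij}(m,n)\in\mathcal B\mid m\ge 0\text{ or }n\ge 0\}$, $\mathcal L_r^+=\mathrm{span}\,\mathcal B_+\oplus\mathbb C$, and $M_r=U(\mathcal L_r)\otimes_{U(\mathcal L_r^+)}\mathbb C\mathbf 1$, where $\mathcal B_+$ acts by $0$ on $\mathbf 1$ and $s\in\mathbb C\subset\mathcal L_r$ acts by the scalar $s$. Define operators on $M_r$: $L_r^{ij}(m)=\frac12\sum_{h\in\mathbb Z}v^{ij}(m-h,h)$ if $i\ne j$ or $m\ne0$, and $L_r^{ii}(0)=\frac12 v^{ii}(0,0)+\sum_{h>0}v^{ii}(-h,h)$ (on each vector only finitely many terms are nonzero). *)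

(* Defs.v *)
From HB Require Import structures.
From mathcomp Require Import all_boot all_order all_algebra.
From mathcomp Require Import complex.
From mathcomp Require Import reals Rstruct.

Set Implicit Arguments.
Unset Strict Implicit.
Unset Printing Implicit Defensive.
Import Order.TTheory GRing.Theory Num.Theory.
Local Open Scope ring_scope.

Definition CC : fieldType := (Rdefinitions.R)[i]%C.

(* Formal linear combinations of words over an alphabet T: the tensor
   algebra T(V) of the vector space V with basis T, with basis the words
   (seq T).  A vector is a function (seq T -> CC) (coefficient of each
   word); all vectors used below are finitely supported.               *)
Definition Vec (T : eqType) := seq T -> CC.

Definition e (T : eqType) (w : seq T) : Vec T := fun t => (t == w)%:R.

Definition comb (T : eqType) (s : seq (CC * seq T)) : Vec T :=
  fun t => \sum_(p <- s) p.1 * e p.2 t.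

Inductive span (T : eqType) (G : Vec T -> Prop) : Vec T -> Prop :=
| span0 : span G (fun _ => 0)
| span_gen v : G v -> span G v
| span_add v w : span G v -> span G w -> span G (fun t => v t + w t)
| span_scale (a : CC) v : span G v -> span G (fun t => a * v t).

(* The algebra A = U(hat h)/<c - 1>, presented as a quotient of the
   tensor algebra of hat h.  Basis letters of hat h:
     Some (i, m) = v^i(m)   (1 <= i <= d, m in Z),     None = c.       *)
Definition hlet := option (nat * int).

Definition valid_h (d : nat) (a : hlet) : bool :=
  if a is Some (i, _) then (1 <= i <= d)%N else true.

Definition hbr (a b : hlet) : seq (CC * seq hlet) :=
  match a, b with
  | Some (i, m), Some (j, n) =>
      if (i == j) && (m + n == 0) then [:: (m%:~R, [:: None])] else [::]
  | _, _ => [::]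
  end.

(* generators of the two-sided ideal of T(hat h) whose quotient is
   A = U(hat h)/<c - 1> *)
Inductive genA (d : nat) : Vec hlet -> Prop :=
| genA_br (u w : seq hlet) (a b : hlet) :
    valid_h d a -> valid_h d b ->
    genA d (fun t => e (u ++ a :: b :: w) t - e (u ++ b :: a :: w) t
                     - \sum_(p <- hbr a b) p.1 * e (u ++ p.2 ++ w) t)
| genA_c (u w : seq hlet) :
    genA d (fun t => e (u ++ None :: w) t - e (u ++ w) t).

Definition eqA (d : nat) (x y : Vec hlet) : Prop :=
  span (genA d) (fun t => x t - y t).

(* The Lie algebra L_r, with basis  B  u  {1}.  Letters:
     Some (i, j, m, n) = v^{ij}(m,n)  (an element of B when valid_L),
     None              = the element 1 of C (the summand C of L).     *)
Definition llet := option (nat * nat * int * int).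

Definition valid_L (d : nat) (l : llet) : bool :=
  match l with
  | Some (i, j, m, n) =>
      [&& (1 <= i <= d)%N, (1 <= j <= d)%N &
          (i < j)%N || ((i == j) && (m <= n))]
  | None => true
  end.

Definition Bplus (d : nat) (l : llet) : bool :=
  match l with
  | Some (i, j, m, n) => valid_L d l && ((0 <= m) || (0 <= n))
  | None => false
  end.

(* image in A of a basis element of L: v^{ij}(m,n) |-> v^i(m) v^j(n),
   1 |-> 1 *)
Definition wordA (l : llet) : seq hlet :=
  if l is Some (i, j, m, n) then [:: Some (i, m); Some (j, n)] else [::].

(* [x,y]_r = pi_1([x,y]) + r pi_2([x,y]):  coefficient of a letter in
   the bracket of L_r from its coefficient in the commutator in A *)
Definition rcoef (r : CC) (p : CC * llet) : CC :=
  if p.2 is None then r * p.1 else p.1.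

(* Generators of the left ideal  I + T(L)(L_r^+ - chi)  of the tensor
   algebra T(L_r) such that M_r = T(L_r) / (that left ideal), where I is
   the two-sided ideal defining U(L_r).  In the bracket relation, z is
   the expansion of the commutator xy - yx (computed in A) in the basis
   B u {1} of L. *)
Inductive genM (d : nat) (r : CC) : Vec llet -> Prop :=
| genM_br (u w : seq llet) (x y : llet) (z : seq (CC * llet)) :
    valid_L d x -> valid_L d y -> all (valid_L d) (map snd z) ->
    eqA d (comb [:: (1, wordA x ++ wordA y); (-1, wordA y ++ wordA x)])
          (comb [seq (p.1, wordA p.2) | p <- z]) ->
    genM d r (fun t => e (u ++ x :: y :: w) t - e (u ++ y :: x :: w) t
                       - \sum_(p <- z) rcoef r p * e (u ++ p.2 :: w) t)
| genM_plus (u : seq llet) (b : llet) :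
    Bplus d b -> genM d r (e (rcons u b))
| genM_const (u : seq llet) :
    genM d r (fun t => e (rcons u None) t - e u t).

(* equality in M_r of (the classes of) two elements of T(L_r);
   the vector 1 of M_r is the class of e [::] *)
Definition eqM (d : nat) (r : CC) (x y : Vec llet) : Prop :=
  span (genM d r) (fun t => x t - y t).

(* The element v^{ij}(m,n) of L expressed in the basis B u {1}, using
   v^{ij}(m,n) = v^{ji}(n,m) unless i = j, m = -n, and
   v^{ii}(m,-m) = v^{ii}(-m,m) + m. *)
Definition vel (i j : nat) (m n : int) : seq (CC * llet) :=
  if (i < j)%N then [:: (1, Some (i, j, m, n))]
  else if (j < i)%N then [:: (1, Some (j, i, n, m))]
  else if m <= n then [:: (1, Some (i, i, m, n))]
  else if m + n == 0 then [:: (1, Some (i, i, n, m)); (m%:~R, None)]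
  else [:: (1, Some (i, i, n, m))].

Definition act (z : seq (CC * llet)) (v : Vec llet) : Vec llet :=
  fun t => match t with
           | [::] => 0
           | l :: t' => \sum_(p <- z | p.2 == l) p.1 * v t'
           end.

Definition vact (i j : nat) (m n : int) (v : Vec llet) : Vec llet :=
  act (vel i j m n) v.

(* Lrel d r i j m v w  :  L_r^{ij}(m) v = w  in M_r, where the infinite
   sum is well defined: all but finitely many terms vanish in M_r, and
   w equals the sum of the remaining ones. *)
Definition Lrel (d : nat) (r : CC) (i j : nat) (m : int)
    (v w : Vec llet) : Prop :=
  if (i != j) || (m != 0) then
    exists H : nat,
      (forall h : int, (H < absz h)%N -> eqM d r (vact i j (m - h) h v) (fun _ => 0))
      /\ eqM d r w (fun t => 2^-1 *
              \sum_(k < (H + H).+1)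
                 vact i j (m - (k%:Z - H%:Z)) (k%:Z - H%:Z) v t)
  else
    exists H : nat,
      (forall h : nat, (H < h)%N -> eqM d r (vact i i (- h%:Z) h%:Z v) (fun _ => 0))
      /\ eqM d r w (fun t => 2^-1 * vact i i 0 0 v t +
              \sum_(1 <= h < H.+1) vact i i (- h%:Z) h%:Z v t).

(* Main.v *)
Require Import Defs.
From HB Require Import structures.
From mathcomp Require Import all_boot all_order all_algebra.
From mathcomp Require Import complex.
From mathcomp Require Import reals Rstruct.
From mathcomp Require Import ring zify.
From Stdlib Require Import FunctionalExtensionality.
Set Implicit Arguments.
Unset Strict Implicit.
Unset Printing Implicit Defensive.
Import Order.TTheory GRing.Theory Num.Theory.
Local Open Scope ring_scope.
Section Gen.
Variable T : eqType.
Variable G : Vec T -> Prop.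

Lemma span_ext (f g : Vec T) : Defs.span G f -> (forall t, f t = g t) -> Defs.span G g.
Proof.
move=> H E; have -> : g = f by apply: functional_extensionality => t; rewrite E.
done.
Qed.

Definition eqG (x y : Vec T) := Defs.span G (fun t => x t - y t).

Lemma eqG_ext x y : (forall t, x t = y t) -> eqG x y.
Proof. move=> E; apply: span_ext (@span0 _ G) _ => t; rewrite E subrr. done. Qed.

Lemma eqG_refl x : eqG x x.
Proof. exact: eqG_ext. Qed.

Lemma eqG_sym x y : eqG x y -> eqG y x.
Proof. move=> H; apply: span_ext (span_scale (-1) H) _ => t; ring. Qed.

Lemma eqG_trans x y z : eqG x y -> eqG y z -> eqG x z.
Proof. move=> H1 H2; apply: span_ext (span_add H1 H2) _ => t; ring. Qed.

Lemma eqG_add x1 y1 x2 y2 : eqG x1 y1 -> eqG x2 y2 ->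
  eqG (fun t => x1 t + x2 t) (fun t => y1 t + y2 t).
Proof. move=> H1 H2; apply: span_ext (span_add H1 H2) _ => t; ring. Qed.

Lemma eqG_scale a x y : eqG x y -> eqG (fun t => a * x t) (fun t => a * y t).
Proof. move=> H; apply: span_ext (span_scale a H) _ => t; ring. Qed.

Lemma eqG_gen x y : G (fun t => x t - y t) -> eqG x y.
Proof. move=> H; exact: span_gen. Qed.

Lemma eqG_ext_l x x' y : (forall t, x t = x' t) -> eqG x' y -> eqG x y.
Proof. move=> E H; exact: eqG_trans (eqG_ext E) H. Qed.
Lemma eqG_ext_r x y y' : (forall t, y t = y' t) -> eqG x y' -> eqG x y.
Proof. move=> E H; apply: eqG_trans H _; apply: eqG_ext => t; by rewrite E. Qed.

Lemma eqG_sum (I : Type) (s : seq I) (F1 F2 : I -> Vec T) :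
  (forall k, eqG (F1 k) (F2 k)) ->
  eqG (fun t => \sum_(k <- s) F1 k t) (fun t => \sum_(k <- s) F2 k t).
Proof.
move=> H; elim: s => [|k s IH].
  by apply: eqG_ext => t; rewrite !big_nil.
apply: (eqG_ext_l (x' := fun t => F1 k t + \sum_(k <- s) F1 k t)).
  by move=> t; rewrite big_cons.
apply: (eqG_ext_r (y' := fun t => F2 k t + \sum_(k <- s) F2 k t)).
  by move=> t; rewrite big_cons.
exact: eqG_add.
Qed.

End Gen.

Lemma eqA_G d x y : eqA d x y = eqG (genA d) x y. Proof. by []. Qed.
Lemma eqM_G d r x y : eqM d r x y = eqG (genM d r) x y. Proof. by []. Qed.

Definition brc (a b : hlet) : CC :=
  match a, b with
  | Some (i, m), Some (j, n) => if (i == j) && (m + n == 0) then m%:~R else 0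
  | _, _ => 0
  end.

Lemma swapA d u w a b : valid_h d a -> valid_h d b ->
  eqG (genA d) (e (u ++ a :: b :: w))
     (fun t => e (u ++ b :: a :: w) t + brc a b * e (u ++ w) t).
Proof.
move=> va vb.
have H1 := span_gen (genA_br u w va vb).
have H2 := span_gen (genA_c d u w).
case: a va H1 => [[i m]|] va H1; case: b vb H1 => [[j n]|] vb H1 /=;
  rewrite /= ?big_nil in H1; try (apply: span_ext H1 _ => t /=; rewrite ?big_nil; ring).
case: ifP H1 => C H1; rewrite /= ?big_cons ?big_nil in H1.
  apply: span_ext (span_add H1 (span_scale m%:~R H2)) _ => t /=; rewrite ?big_cons ?big_nil /=; ring.
apply: span_ext H1 _ => t /=; rewrite ?big_cons ?big_nil /=; ring.
Qed.

Definition lv (i j : nat) (a b : int) : llet :=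
  if (i < j)%N then Some (i, j, a, b)
  else if (j < i)%N then Some (j, i, b, a)
  else if a <= b then Some (i, i, a, b) else Some (i, i, b, a).

Definition sc (i j : nat) (a b : int) := (i != j) || (a <= b) || (a + b != 0).

Lemma vel_single i j a b : sc i j a b -> vel i j a b = [:: (1, lv i j a b)].
Proof.
rewrite /sc /vel /lv; case: ltngtP => //= h; subst.
case: ifP => //= _ /negPf ->; done.
Qed.

Lemma valid_lv d i j a b : (1 <= i <= d)%N -> (1 <= j <= d)%N -> valid_L d (lv i j a b).
Proof.
move=> hi hj; rewrite /lv; case: ltngtP => h /=; rewrite ?hi ?hj ?h //=.
subst; case: leP => hab /=; rewrite ?hj ?eqxx //=.
  by rewrite hab orbT.
by rewrite (ltW hab) orbT.
Qed.

Lemma Bplus_lv d i j a b : (1 <= i <= d)%N -> (1 <= j <= d)%N ->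
  (0 <= a) || (0 <= b) -> Bplus d (lv i j a b).
Proof.
move=> hi hj hab; have := valid_lv a b hi hj; rewrite /Bplus /lv.
case: (i < j)%N; first by move=> /= ->.
case: (j < i)%N; first by move=> /= ->; rewrite orbC.
by case: (a <= b); move=> /= ->; rewrite // orbC.
Qed.

Lemma rcoef_lv r c i j a b : rcoef r (c, lv i j a b) = c.
Proof. by rewrite /lv; case: (i < j)%N; case: (j < i)%N; case: (a <= b). Qed.

Lemma vact_e i j a b w : sc i j a b -> vact i j a b (e w) = e (lv i j a b :: w).
Proof.
move=> h; rewrite /vact vel_single //; apply: functional_extensionality => t.
rewrite /act /e; case: t => [|l t'] //=.
rewrite big_cons big_nil /= eqseq_cons [lv i j a b == l]eq_sym.
by case: (l == lv i j a b) => /=; rewrite ?mul1r ?addr0.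
Qed.

Lemma wordA_lv d u w i j a b : sc i j a b -> (1 <= i <= d)%N -> (1 <= j <= d)%N ->
  eqG (genA d) (e (u ++ wordA (lv i j a b) ++ w)) (e (u ++ Some (i, a) :: Some (j, b) :: w)).
Proof.
rewrite /sc /lv => hs hi hj.
have vi : valid_h d (Some (i, a)) by [].
have vj : valid_h d (Some (j, b)) by [].
case: ltngtP hs => h hs /=; first exact: eqG_refl.
  apply: eqG_trans (swapA u w vj vi) _; apply: eqG_ext => t /=.
  by rewrite (ltn_eqF h) /= mul0r addr0.
subst; case: ifP => hab /=; first exact: eqG_refl.
apply: eqG_trans (swapA u w vj vi) _; apply: eqG_ext => t /=.
have -> : (j == j) = true by apply/eqP.
rewrite /= (addrC b a); move: hs; rewrite /= hab /= => /negPf ->.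
by rewrite mul0r addr0.
Qed.

Lemma comm2 d x1 x2 y1 y2 : valid_h d x1 -> valid_h d x2 -> valid_h d y1 -> valid_h d y2 ->
  eqG (genA d) (fun t => e [:: x1; x2; y1; y2] t - e [:: y1; y2; x1; x2] t)
    (fun t => brc x1 y2 * e [:: y1; x2] t + brc x1 y1 * e [:: y2; x2] t
            + brc x2 y2 * e [:: x1; y1] t + brc x2 y1 * e [:: x1; y2] t).
Proof.
move=> v1 v2 w1 w2.
have s1 := swapA [:: x1] [:: y2] v2 w1.
have s2 := swapA [:: x1; y1] [::] v2 w2.
have s3 := swapA [::] [:: y2; x2] v1 w1.
have s4 := swapA [:: y1] [:: x2] v1 w2.
apply: span_ext (span_add s1 (span_add s2 (span_add s3 s4))) _ => t /=; ring.
Qed.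

Lemma comm_lv d i1 j1 a1 b1 i2 j2 a2 b2 :
  sc i1 j1 a1 b1 -> sc i2 j2 a2 b2 ->
  (1 <= i1 <= d)%N -> (1 <= j1 <= d)%N -> (1 <= i2 <= d)%N -> (1 <= j2 <= d)%N ->
  eqG (genA d)
    (comb [:: (1, wordA (lv i1 j1 a1 b1) ++ wordA (lv i2 j2 a2 b2));
              (-1, wordA (lv i2 j2 a2 b2) ++ wordA (lv i1 j1 a1 b1))])
    (fun t => brc (Some (i1, a1)) (Some (j2, b2)) * e [:: Some (i2, a2); Some (j1, b1)] t
            + brc (Some (i1, a1)) (Some (i2, a2)) * e [:: Some (j2, b2); Some (j1, b1)] t
            + brc (Some (j1, b1)) (Some (j2, b2)) * e [:: Some (i1, a1); Some (i2, a2)] t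
            + brc (Some (j1, b1)) (Some (i2, a2)) * e [:: Some (i1, a1); Some (j2, b2)] t).
Proof.
move=> sx sy hi1 hj1 hi2 hj2.
have h1 := wordA_lv ([::]) (wordA (lv i2 j2 a2 b2)) sx hi1 hj1.
have h2 := wordA_lv ([:: Some (i1, a1); Some (j1, b1)]) [::] sy hi2 hj2.
have h3 := wordA_lv ([::]) (wordA (lv i1 j1 a1 b1)) sy hi2 hj2.
have h4 := wordA_lv ([:: Some (i2, a2); Some (j2, b2)]) [::] sx hi1 hj1.
have c := comm2 (d := d) (x1 := Some (i1, a1)) (x2 := Some (j1, b1))
   (y1 := Some (i2, a2)) (y2 := Some (j2, b2)) hi1 hj1 hi2 hj2.
apply: span_ext (span_add h1 (span_add h2 (span_add (span_scale (-1) h3)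
   (span_add (span_scale (-1) h4) c)))) _ => t /=.
rewrite /comb !big_cons big_nil /= !cats0; ring.
Qed.

Lemma brM d r x y (z : seq (CC * llet)) :
  Bplus d x -> valid_L d x -> valid_L d y -> all (valid_L d) (map snd z) ->
  eqA d (comb [:: (1, wordA x ++ wordA y); (-1, wordA y ++ wordA x)])
        (comb [seq (p.1, wordA p.2) | p <- z]) ->
  eqG (genM d r) (e [:: x; y]) (fun t => \sum_(p <- z) rcoef r p * e [:: p.2] t).
Proof.
move=> bx vx vy vz hA.
have g1 := span_gen (genM_br r [::] [::] vx vy vz hA).
have g2 := span_gen (genM_plus r [:: y] bx).
apply: span_ext (span_add g1 g2) _ => t /=; ring.
Qed.

Lemma Lrel1 d r i j (m : int) v (H : nat) (c1 c2 : int -> CC) (V1 V2 : Vec llet) :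
  (i != j) || (m != 0) ->
  (forall h, eqG (genM d r) (vact i j (m - h) h v) (fun t => c1 h * V1 t + c2 h * V2 t)) ->
  (forall h : int, (H < absz h)%N -> c1 h = 0 /\ c2 h = 0) ->
  Lrel d r i j m v (fun t => 2^-1 * ((\sum_(k < (H + H).+1) c1 (k%:Z - H%:Z)) * V1 t
                     + (\sum_(k < (H + H).+1) c2 (k%:Z - H%:Z)) * V2 t)).
Proof.
move=> C hv hc; rewrite /Lrel C; exists H; split.
  move=> h hh; have [z1 z2] := hc h hh; apply: eqG_trans (hv h) _.
  by apply: eqG_ext => t; rewrite z1 z2; ring.
apply: (eqG_ext_l (x' := fun t => 2^-1 * \sum_(k < (H + H).+1)
          (c1 (k%:Z - H%:Z) * V1 t + c2 (k%:Z - H%:Z) * V2 t))).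
  by move=> t; rewrite big_split /= !mulr_suml.
apply: eqG_scale; apply: eqG_sym.
exact: (eqG_sum _ (fun k : 'I_(H + H).+1 => hv (k%:Z - H%:Z))).
Qed.

Lemma Lrel0 d r i v (H : nat) (c0 : CC) (c : nat -> CC) (V : Vec llet) :
  eqG (genM d r) (vact i i 0 0 v) (fun t => c0 * V t) ->
  (forall h : nat, eqG (genM d r) (vact i i (- h%:Z) h%:Z v) (fun t => c h * V t)) ->
  (forall h : nat, (H < h)%N -> c h = 0) ->
  Lrel d r i i 0 v (fun t => (2^-1 * c0 + \sum_(1 <= h < H.+1) c h) * V t).
Proof.
move=> h0 hv hc; rewrite /Lrel eqxx /=; exists H; split.
  move=> h hh; apply: eqG_trans (hv h) _.
  by apply: eqG_ext => t; rewrite hc //; ring.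
apply: (eqG_ext_l (x' := fun t => 2^-1 * (c0 * V t) + \sum_(1 <= h < H.+1)
          (c h * V t))).
  by move=> t; rewrite -mulr_suml; ring.
apply: eqG_add; first by apply: eqG_scale; apply: eqG_sym.
apply: eqG_sym; exact: (eqG_sum _ (fun h : nat => hv h)).
Qed.

Lemma sumZ1 (H : nat) (c : int) : (absz c <= H)%N ->
  \sum_(k < (H + H).+1) ((k%:Z - H%:Z == c)%:R : CC) = 1.
Proof.
move=> hc; have hk : (absz (c + H%:Z)%R < (H + H).+1)%N by lia.
rewrite (bigD1 (Ordinal hk)) //=.
case: eqP => [_|E]; last by exfalso; apply: E; lia.
rewrite big1 ?addr0 // => k /negP hk'; case: eqP => // E; exfalso; apply: hk'.
by apply/eqP/val_inj => /=; lia.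
Qed.

Lemma sumN1 (H : nat) (c : int) : 0 < c -> (absz c <= H)%N ->
  \sum_(1 <= h < H.+1) ((h%:Z == c)%:R : CC) = 1.
Proof.
move=> c0 hc; rewrite (bigD1_seq (absz c)) /=; last exact: iota_uniq.
  case: eqP => [_|E]; last by exfalso; apply: E; lia.
  rewrite big1 ?addr0 // => k hk; case: eqP => // E; exfalso.
  by move/eqP: hk; apply; lia.
rewrite mem_index_iota; apply/andP; split; lia.
Qed.

Lemma brc_same i a b : brc (Some (i, a)) (Some (i, b)) = if a + b == 0 then a%:~R else 0.
Proof. by rewrite /brc; have -> : (i == i) = true by apply/eqP. Qed.

Lemma brc_diff i j a b : i != j -> brc (Some (i, a)) (Some (j, b)) = 0.
Proof. by rewrite /brc => /negPf ->. Qed.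

Lemma intr_neq0 (k : int) : k != 0 -> (k%:~R : CC) != 0.
Proof. move=> h; have E := (@intr_eq0 (Rdefinitions.R)[i]%C k); rewrite /CC E; exact h. Qed.


Lemma P2h d r i j (m n h : int) : (1 <= i <= d)%N -> (1 <= j <= d)%N -> i != j ->
  m < 0 -> n < 0 ->
  eqG (genM d r) (vact i i (-1 - h) h (vact i j m n (e [::])))
   (fun t => ((h == -m)%:R * (-m)%:~R + (h == m - 1)%:R * (-m)%:~R) * e [:: lv i j (m - 1) n] t
             + 0 * e [::] t).
Proof.
move=> hi hj ij m0 n0.
have s1 : sc i j m n by rewrite /sc ij.
have s2 : sc i i (-1 - h) h by rewrite /sc; apply/orP; right; apply/negP => /eqP; lia.
have s3 : sc i j (m - 1) n by rewrite /sc ij.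
rewrite (vact_e _ s1) (vact_e _ s2).
set coef := (_ + _ : CC).
apply: eqG_trans (brM r (z := [:: (coef, lv i j (m - 1) n)]) _ _ _ _ _) _.
- apply: Bplus_lv => //; case: (lerP 0 h) => hh; apply/orP; [right|left]; lia.
- exact: valid_lv.
- exact: valid_lv.
- by rewrite /= valid_lv.
- rewrite eqA_G /=.
  have c := comm_lv s2 s1 hi hi hi hj.
  have w' := wordA_lv [::] [::] s3 hi hj.
  have tA : eqG (genA d) (fun t => brc (Some (i, -1 - h)) (Some (i, m)) * e [:: Some (j, n); Some (i, h)] t)
     (fun t => (h == m - 1)%:R * (-m)%:~R * e [:: Some (i, m - 1); Some (j, n)] t).
    rewrite brc_same; have [Eh|Eh] := eqVneq h (m - 1).
      subst h; have E1 : -1 - (m - 1) = -m by ring.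
      rewrite E1 addNr eqxx /=.
      have sw := swapA [::] [::] (a := Some (j, n)) (b := Some (i, m - 1)) hj hi.
      apply: span_ext (span_scale (-m)%:~R sw) _ => t.
      rewrite brc_diff 1?eq_sym //=; ring.
    have -> : (-1 - h + m == 0) = false by apply/eqP; move/eqP: Eh; lia.
    by apply: eqG_ext => t /=; ring.
  have tB : forall t, brc (Some (i, h)) (Some (i, m)) * e [:: Some (i, -1 - h); Some (j, n)] t
      = (h == -m)%:R * (-m)%:~R * e [:: Some (i, m - 1); Some (j, n)] t.
    move=> t; rewrite brc_same; have [Eh|Eh] := eqVneq h (-m).
      subst h; have E1 : -1 - - m = m - 1 by ring.
      by rewrite E1 addNr eqxx /=; ring.
    have -> : (h + m == 0) = false by apply/eqP; move/eqP: Eh; lia.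
    by rewrite /=; ring.
  have tB' := eqG_ext (genA d) tB.
  apply: span_ext (span_add c (span_add tA (span_add tB' (span_scale (-coef) w')))) _ => t.
  rewrite ![brc _ (Some (j, n))]brc_diff //= /comb !big_cons !big_nil /= !cats0 /coef; ring.
apply: eqG_ext => t; rewrite big_cons big_nil rcoef_lv; ring.
Qed.

Lemma P1h d r i j (h : int) : (1 <= i <= d)%N -> (1 <= j <= d)%N ->
  eqG (genM d r) (vact i j (-2 - h) h (e [::]))
    (fun t => (h == -1)%:R * e [:: lv i j (-1) (-1)] t + 0 * e [::] t).
Proof.
move=> hi hj.
have s : sc i j (-2 - h) h by rewrite /sc; apply/orP; right; apply/negP => /eqP; lia.
rewrite (vact_e _ s); have [Eh|Eh] := eqVneq h (-1).
  subst h; have -> : (-2 - -1 : int) = -1 by ring.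
  by apply: eqG_ext => t; rewrite mul1r mul0r addr0.
have bp : Bplus d (lv i j (-2 - h) h).
  apply: Bplus_lv => //; case: (lerP 0 h) => hh; apply/orP; [right|left]; lia.
apply: span_ext (span_gen (genM_plus r [::] bp)) _.
by move=> t /=; rewrite !mul0r addr0 subr0.
Qed.

Lemma P3ah d r i j (m n h : int) : (1 <= i <= d)%N -> (1 <= j <= d)%N -> i != j ->
  m < 0 -> n < 0 ->
  eqG (genM d r) (vact i j (-1 - h) h (vact i j n m (e [::])))
   (fun t => ((h == -m)%:R * (-m)%:~R) * e [:: lv i i (m - 1) n] t
             + ((h == n - 1)%:R * (-n)%:~R) * e [:: lv j j m (n - 1)] t).
Proof.
move=> hi hj ij m0 n0.
have s1 : sc i j n m by rewrite /sc ij.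
have s2 : sc i j (-1 - h) h by rewrite /sc ij.
have s3 : sc i i (m - 1) n by rewrite /sc; apply/orP; right; apply/negP => /eqP; lia.
have s4 : sc j j m (n - 1) by rewrite /sc; apply/orP; right; apply/negP => /eqP; lia.
rewrite (vact_e _ s1) (vact_e _ s2).
set c1 := (_ * _ : CC). set c2 := ((h == n - 1)%:R * _ : CC).
apply: eqG_trans (brM r (z := [:: (c1, lv i i (m - 1) n); (c2, lv j j m (n - 1))]) _ _ _ _ _) _.
- apply: Bplus_lv => //; case: (lerP 0 h) => hh; apply/orP; [right|left]; lia.
- exact: valid_lv.
- exact: valid_lv.
- by rewrite /= !valid_lv.
- rewrite eqA_G /=.
  have c := comm_lv s2 s1 hi hj hi hj.
  have w1 := wordA_lv [::] [::] s3 hi hi.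
  have w2 := wordA_lv [::] [::] s4 hj hj.
  have tA : forall t, brc (Some (i, -1 - h)) (Some (i, n)) * e [:: Some (j, m); Some (j, h)] t
      = (h == n - 1)%:R * (-n)%:~R * e [:: Some (j, m); Some (j, n - 1)] t.
    move=> t; rewrite brc_same; have [Eh|Eh] := eqVneq h (n - 1).
      subst h; have E1 : -1 - (n - 1) = -n by ring.
      by rewrite E1 addNr eqxx /=; ring.
    have -> : (-1 - h + n == 0) = false by apply/eqP; move/eqP: Eh; lia.
    by rewrite /=; ring.
  have tB : forall t, brc (Some (j, h)) (Some (j, m)) * e [:: Some (i, -1 - h); Some (i, n)] t
      = (h == -m)%:R * (-m)%:~R * e [:: Some (i, m - 1); Some (i, n)] t.
    move=> t; rewrite brc_same; have [Eh|Eh] := eqVneq h (-m).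
      subst h; have E1 : -1 - - m = m - 1 by ring.
      by rewrite E1 addNr eqxx /=; ring.
    have -> : (h + m == 0) = false by apply/eqP; move/eqP: Eh; lia.
    by rewrite /=; ring.
  have tA' := eqG_ext (genA d) tA.
  have tB' := eqG_ext (genA d) tB.
  apply: span_ext (span_add c (span_add tA' (span_add tB'
     (span_add (span_scale (-c1) w1) (span_scale (-c2) w2))))) _ => t.
  rewrite [brc (Some (i, -1 - h)) (Some (j, m))]brc_diff //.
  rewrite [brc (Some (j, h)) (Some (i, n))]brc_diff 1?eq_sym //.
  rewrite /= /comb !big_cons !big_nil /= !cats0 /c1 /c2 [n - 1 == h]eq_sym; ring.
apply: eqG_ext => t; rewrite !big_cons big_nil !rcoef_lv; ring.
Qed.

Lemma vact_comb2 i j a b (al be ga : CC) (f g : Vec llet) :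
  vact i j a b (fun t => al * (be * f t + ga * g t))
  = fun t => al * (be * vact i j a b f t + ga * vact i j a b g t).
Proof.
apply: functional_extensionality => t; rewrite /vact /act; case: t => [|l t'].
  by rewrite !mulr0 addr0 mulr0.
rewrite !mulr_sumr -big_split mulr_sumr; apply: eq_bigr => p _ /=; ring.
Qed.

Lemma P3bh d r i j (m n : int) (S1 S2 : CC) (h : nat) :
  (1 <= i <= d)%N -> (1 <= j <= d)%N -> i != j -> m < 0 -> n < 0 ->
  eqG (genM d r) (vact i i (- h%:Z) h%:Z
         (fun t => 2^-1 * (S1 * e [:: lv i i (m - 1) n] t + S2 * e [:: lv j j m (n - 1)] t)))
   (fun t => (((h%:Z == -n)%:R * (-n)%:~R + (h%:Z == 1 - m)%:R * (1 - m)%:~R) * (2^-1 * S1))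
              * e [:: lv i i (m - 1) n] t).
Proof.
move=> hi hj ij m0 n0.
have s0 : sc i i (- h%:Z) h%:Z by rewrite /sc; apply/orP; left; apply/orP; right; lia.
have s3 : sc i i (m - 1) n by rewrite /sc; apply/orP; right; apply/negP => /eqP; lia.
have s4 : sc j j m (n - 1) by rewrite /sc; apply/orP; right; apply/negP => /eqP; lia.
have bp : Bplus d (lv i i (- h%:Z) h%:Z) by apply: Bplus_lv => //; apply/orP; right; lia.
rewrite vact_comb2 !(vact_e _ s0).
set cc := (_ + _ : CC).
have Hjj : eqG (genM d r) (e [:: lv i i (- h%:Z) h%:Z; lv j j m (n - 1)]) (fun t => 0).
  apply: eqG_trans (brM r (z := [::]) bp _ _ _ _) _.
  - exact: valid_lv.
  - exact: valid_lv.
  - by [].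
  - rewrite eqA_G /=.
    have c := comm_lv s0 s4 hi hi hj hj.
    apply: span_ext c _ => t.
    rewrite !brc_diff //= /comb !big_cons !big_nil /=; ring.
  by apply: eqG_ext => t; rewrite big_nil.
have Hii : eqG (genM d r) (e [:: lv i i (- h%:Z) h%:Z; lv i i (m - 1) n])
              (fun t => cc * e [:: lv i i (m - 1) n] t).
  apply: eqG_trans (brM r (z := [:: (cc, lv i i (m - 1) n)]) bp _ _ _ _) _.
  - exact: valid_lv.
  - exact: valid_lv.
  - by rewrite /= valid_lv.
  - rewrite eqA_G /=.
    have c := comm_lv s0 s3 hi hi hi hi.
    have w1 := wordA_lv [::] [::] s3 hi hi.
    have z1 : forall t, brc (Some (i, - h%:Z)) (Some (i, n)) * e [:: Some (i, m - 1); Some (i, h%:Z)] t = 0.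
      move=> t; rewrite brc_same.
      have -> : (- h%:Z + n == 0) = false by apply/eqP; lia.
      by rewrite mul0r.
    have z2 : forall t, brc (Some (i, - h%:Z)) (Some (i, m - 1)) * e [:: Some (i, n); Some (i, h%:Z)] t = 0.
      move=> t; rewrite brc_same.
      have -> : (- h%:Z + (m - 1) == 0) = false by apply/eqP; lia.
      by rewrite mul0r.
    have tC : eqG (genA d) (fun t => brc (Some (i, h%:Z)) (Some (i, n)) * e [:: Some (i, - h%:Z); Some (i, m - 1)] t)
        (fun t => (h%:Z == -n)%:R * (-n)%:~R * e [:: Some (i, m - 1); Some (i, n)] t).
      rewrite brc_same; have [Eh|Eh] := eqVneq (h%:Z) (-n).
        rewrite Eh opprK addNr eqxx /=.
        have sw := swapA [::] [::] (a := Some (i, n)) (b := Some (i, m - 1)) hi hi.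
        apply: span_ext (span_scale (-n)%:~R sw) _ => t.
        rewrite brc_same.
        have -> : (n + (m - 1) == 0) = false by apply/eqP; lia.
        rewrite /=; ring.
      have -> : (h%:Z + n == 0) = false by apply/eqP; move/eqP: Eh; lia.
      by apply: eqG_ext => t /=; ring.
    have tD : forall t, brc (Some (i, h%:Z)) (Some (i, m - 1)) * e [:: Some (i, - h%:Z); Some (i, n)] t
        = (h%:Z == 1 - m)%:R * (1 - m)%:~R * e [:: Some (i, m - 1); Some (i, n)] t.
      move=> t; rewrite brc_same; have [Eh|Eh] := eqVneq (h%:Z) (1 - m).
        have E1 : - h%:Z = m - 1 by rewrite Eh; ring.
        have E2 : (h%:Z + (m - 1) == 0) = true by apply/eqP; rewrite Eh; ring.
        by rewrite E1 E2 Eh /=; ring.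
      have -> : (h%:Z + (m - 1) == 0) = false by apply/eqP; move/eqP: Eh; lia.
      by rewrite /=; ring.
    have z1' := eqG_ext (genA d) z1.
    have z2' := eqG_ext (genA d) z2.
    have tD' := eqG_ext (genA d) tD.
    apply: span_ext (span_add c (span_add z1' (span_add z2' (span_add tC
       (span_add tD' (span_scale (-cc) w1)))))) _ => t.
    rewrite /= /comb !big_cons !big_nil /= !cats0 /cc; ring.
  by apply: eqG_ext => t; rewrite big_cons big_nil rcoef_lv; ring.
have := eqG_add (eqG_scale (2^-1 * S1) Hii) (eqG_scale (2^-1 * S2) Hjj).
move=> HH; apply: eqG_trans (eqG_trans _ HH) _.
  by apply: eqG_ext => t; ring.
by apply: eqG_ext => t; ring.
Qed.

Lemma two_neq0 : (2 : CC) != 0.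
Proof. have := intr_neq0 (k := 2) isT. by []. Qed.

Theorem lemma3p2 (d : nat) (r : CC) : (2 <= d)%N ->
  (forall i j : nat, (1 <= i <= d)%N -> (1 <= j <= d)%N ->
     exists w, Lrel d r i j (-2) (e [::]) w /\
       eqM d r (vact i j (-1) (-1) (e [::])) (fun t => 2 * w t))
  /\
  (forall (i j : nat) (m n : int), (1 <= i <= d)%N -> (1 <= j <= d)%N ->
     i != j -> m < 0 -> n < 0 ->
     exists w, Lrel d r i i (-1) (vact i j m n (e [::])) w /\
       eqM d r (vact i j (m - 1) n (e [::])) (fun t => - (m%:~R)^-1 * w t))
  /\
  (forall (i j : nat) (m n : int), (1 <= i <= d)%N -> (1 <= j <= d)%N ->
     i != j -> m < 0 -> n < 0 ->
     exists w1 w2, Lrel d r i j (-1) (vact i j n m (e [::])) w1 /\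
       Lrel d r i i 0 w1 w2 /\
       eqM d r (vact i i (m - 1) n (e [::]))
               (fun t => 2 / (m * (m + n - 1))%:~R * w2 t)).
Proof.
move=> d2; split; [|split].
- move=> i j hi hj; eexists; split.
    apply: (Lrel1 (H := 1) (c1 := fun h => (h == -1)%:R) (c2 := fun _ => 0)
                  (V1 := e [:: lv i j (-1) (-1)]) (V2 := e [::])).
    + by apply/orP; right.
    + by move=> h; exact: P1h.
    + move=> h hh; split => //; have -> : (h == -1) = false by apply/eqP; lia.
      by [].
  have s : sc i j (-1) (-1) by rewrite /sc; apply/orP; right.
  rewrite eqM_G (vact_e _ s); apply: eqG_ext => t /=.
  rewrite sumZ1 // big1_eq mul0r addr0 mul1r mulrA mulfV ?mul1r //; exact: two_neq0.
- move=> i j m n hi hj ij m0 n0; eexists; split.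
    apply: (Lrel1 (H := (absz m).+1)
       (c1 := fun h => (h == -m)%:R * (-m)%:~R + (h == m - 1)%:R * (-m)%:~R)
       (c2 := fun _ => 0) (V1 := e [:: lv i j (m - 1) n]) (V2 := e [::])).
    + by apply/orP; right.
    + by move=> h; exact: P2h.
    + move=> h hh; split => //.
      have -> : (h == -m) = false by apply/eqP; lia.
      have -> : (h == m - 1) = false by apply/eqP; lia.
      by rewrite mul0r add0r.
  have s : sc i j (m - 1) n by rewrite /sc ij.
  rewrite eqM_G (vact_e _ s); apply: eqG_ext => t /=.
  rewrite big_split /= -!mulr_suml !sumZ1; [|lia|lia].
  rewrite big1_eq mul0r addr0 intrN.
  field; apply: intr_neq0; apply/eqP; lia.
- move=> i j m n hi hj ij m0 n0.
  pose H1 := ((absz m + absz n).+1)%N.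
  pose S1 : CC := \sum_(k < (H1 + H1).+1) ((k%:Z - H1%:Z == -m)%:R * (-m)%:~R).
  pose S2 : CC := \sum_(k < (H1 + H1).+1) ((k%:Z - H1%:Z == n - 1)%:R * (-n)%:~R).
  exists (fun t => 2^-1 * (S1 * e [:: lv i i (m - 1) n] t + S2 * e [:: lv j j m (n - 1)] t)).
  pose H2 := ((absz m + absz n).+2)%N.
  pose cf := fun h : nat => ( ((h%:Z == -n)%:R * (-n)%:~R + (h%:Z == 1 - m)%:R * (1 - m)%:~R) * (2^-1 * S1) : CC).
  exists (fun t => (2^-1 * cf 0%N + \sum_(1 <= h < H2.+1) cf h) * e [:: lv i i (m - 1) n] t).
  split; [|split].
  + apply: (Lrel1 (H := H1) (c1 := fun h : int => (h == -m)%:R * (-m)%:~R)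
       (c2 := fun h : int => (h == n - 1)%:R * (-n)%:~R)).
    * by apply/orP; left.
    * by move=> h; exact: P3ah.
    * move=> h hh /=; split.
        have -> : (h == -m) = false by apply/eqP; lia.
        by rewrite mul0r.
      have -> : (h == n - 1) = false by apply/eqP; lia.
      by rewrite mul0r.
  + apply: Lrel0.
    * exact: (P3bh r S1 S2 0 hi hj ij m0 n0).
    * by move=> h; exact: P3bh.
    * move=> h hh; rewrite /cf.
      have -> : (h%:Z == -n) = false by apply/eqP; lia.
      have -> : (h%:Z == 1 - m) = false by apply/eqP; lia.
      by rewrite !mul0r addr0 mul0r.
  + have s : sc i i (m - 1) n by rewrite /sc; apply/orP; right; apply/negP => /eqP; lia.
    rewrite eqM_G (vact_e _ s); apply: eqG_ext => t /=.
    rewrite /cf /=.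
    have -> : ((0%N)%:Z == -n) = false by apply/eqP; lia.
    have -> : ((0%N)%:Z == 1 - m) = false by apply/eqP; lia.
    rewrite -mulr_suml big_split /= -!mulr_suml !sumN1; try lia.
    rewrite /S1 -mulr_suml sumZ1; last by lia.
    rewrite !intrM !intrB !intrD !intrN ?mulr1z.
    have m0' : (m%:~R : CC) != 0 by apply: intr_neq0; apply/eqP; lia.
    have mn0 : ((m + n - 1)%:~R : CC) != 0 by apply: intr_neq0; apply/eqP; lia.
    rewrite intrB intrD ?mulr1z in mn0.
    by field; rewrite mn0 m0'.
Qed.
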